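(* Let $\{W_n\}_{n\ge0}$ be an Appell monic polynomial sequence with cubic decomposition $W_{3n}(x)=P_n(x^3)+xa^1_{n-1}(x^3)+x^2a^2_{n-1}(x^3)$, $W_{3n+1}(x)=b^1_n(x^3)+xQ_n(x^3)+x^2b^2_{n-1}(x^3)$, $W_{3n+2}(x)=c^1_n(x^3)+xc^2_n(x^3)+x^2R_n(x^3)$ (components as in the context). Let $\mathcal{O}_{0,1,2}=D(I+3xD)(2I+3xD)$, $\mathcal{O}_{2,0,1}=(2I+3xD)D(I+3xD)$, $\mathcal{O}_{1,2,0}=(I+3xD)(2I+3xD)D$. Then for $n\ge1$: $a^2_{n-1}=((n+1)(3n+1)(3n+2))^{-1}\mathcal{O}_{0,1,2}a^2_n$, $b^2_{n-1}=((n+1)(3n+2)(3n+4))^{-1}\mathcal{O}_{0,1,2}b^2_n$, $R_n=((n+1)(3n+4)(3n+5))^{-1}\mathcal{O}_{0,1,2}R_{n+1}$, $a^1_{n-1}=((n+1)(3n+1)(3n+2))^{-1}\mathcal{O}_{2,0,1}a^1_n$, $Q_n=((n+1)(3n+2)(3n+4))^{-1}\mathcal{O}_{2,0,1}Q_{n+1}$, $c^2_{n-1}=(n(3n+1)(3n+2))^{-1}\mathcal{O}_{2,0,1}c^2_n$, $P_n=((n+1)(3n+1)(3n+2))^{-1}\mathcal{O}_{1,2,0}P_{n+1}$, $b^1_{n-1}=(n(3n-1)(3n+1))^{-1}\mathcal{O}_{1,2,0}b^1_n$, $c^1_{n-1}=(n(3n+1)(3n+2))^{-1}\mathcal{O}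_{1,2,0}c^1_n$.
   Context: $\mathcal{P}$ is the space of complex polynomials; $I$ is the identity, $D$ the derivative, $x$ multiplication by $x$, products of operators are compositions. An MPS is a sequence $\{W_n\}_{n\ge0}$ with $W_n$ monic of degree $n$; it is Appell if $DW_{n+1}=(n+1)W_n$ for $n\ge0$. Cubic decomposition: for any MPS there are unique polynomials with the displayed identities for all $n\ge0$, where $\{P_n\},\{Q_n\},\{R_n\}$ are MPSs and $\deg a^1_{n-1},\deg a^2_{n-1},\deg b^2_{n-1}\le n-1$, $\deg b^1_n,\deg c^1_n,\deg c^2_n\le n$, with $a^1_{-1}=a^2_{-1}=b^2_{-1}=0$. *)

(* Defs.v *)
From HB Require Import structures.
From mathcomp Require Import all_boot all_order all_algebra.
From mathcomp Require Import complex Rstruct.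
Set Implicit Arguments.
Unset Strict Implicit.
Unset Printing Implicit Defensive.
Import Order.TTheory GRing.Theory Num.Theory.
Local Open Scope ring_scope.

Definition C : Type := complex Rdefinitions.R.
Notation Cpoly := {poly C}.

Definition opD (p : Cpoly) : Cpoly := p^`().
Definition opL (k : nat) (p : Cpoly) : Cpoly := k%:R *: p + 3%:R *: ('X * p^`()).

Definition O012 (p : Cpoly) : Cpoly := opD (opL 1 (opL 2 p)).
Definition O201 (p : Cpoly) : Cpoly := opL 2 (opD (opL 1 p)).
Definition O120 (p : Cpoly) : Cpoly := opL 1 (opL 2 (opD p)).

Definition MPS (W : nat -> Cpoly) : Prop :=
  forall n, W n \is monic /\ size (W n) = n.+1.

Definition Appell (W : nat -> Cpoly) : Prop :=
  MPS W /\ forall n, (W n.+1)^`() = n.+1%:R *: W n.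

(* For a sequence f indexed by m >= 0, [prev f n] is f_{n-1}, with f_{-1} = 0. *)
Definition prev (f : nat -> Cpoly) (n : nat) : Cpoly :=
  if n is m.+1 then f m else 0.

Definition cub (p : Cpoly) : Cpoly := p \Po 'X^3.

(* Cubic decomposition of W with components P,Q,R (MPS), a1 a2 b2 (indexed so
   that a1 m = a^1_m, m >= 0, a^1_{-1} = 0), b1 c1 c2. *)
Definition cubic_decomposition (W : nat -> Cpoly)
  (P Q R a1 a2 b1 b2 c1 c2 : nat -> Cpoly) : Prop :=
  [/\ MPS P /\ MPS Q /\ MPS R,
      (forall m, size (a1 m) <= m.+1 /\ size (a2 m) <= m.+1 /\ size (b2 m) <= m.+1)%N,
      (forall n, size (b1 n) <= n.+1 /\ size (c1 n) <= n.+1 /\ size (c2 n) <= n.+1)%N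
    & forall n,
      [/\ W (3 * n)%N = cub (P n) + 'X * cub (prev a1 n) + 'X^2 * cub (prev a2 n),
          W (3 * n + 1)%N = cub (b1 n) + 'X * cub (Q n) + 'X^2 * cub (prev b2 n)
        & W (3 * n + 2)%N = cub (c1 n) + 'X * cub (c2 n) + 'X^2 * cub (R n)]].

(* Main.v *)
Require Import Defs.
From HB Require Import structures.
From mathcomp Require Import all_boot all_order all_algebra.
From mathcomp Require Import complex Rstruct.
From mathcomp Require Import ring zify.
Import GRing.Theory Num.Theory.
Local Open Scope ring_scope.

Lemma derX0 (p : {poly C}) : (cub p)^`() = 3%:R *: ('X^2 * cub p^`()).
Proof.
rewrite /cub deriv_comp derivXn /= !scaler_nat; ring.
Qed.

Lemma cubX3 (p : {poly C}) : cub ('X * p) = 'X^3 * cub p.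
Proof. by rewrite /cub comp_polyM comp_polyX. Qed.

Lemma derX1 (p : {poly C}) : ('X * cub p)^`() = cub (opL 1 p).
Proof.
rewrite derivM derivX derX0 /opL /cub comp_polyD !comp_polyZ comp_polyM comp_polyX.
rewrite !scaler_nat; ring.
Qed.

Lemma derX2 (p : {poly C}) : ('X^2 * cub p)^`() = 'X * cub (opL 2 p).
Proof.
rewrite derivM derivXn derX0 /opL /cub comp_polyD !comp_polyZ comp_polyM comp_polyX /=.
rewrite !scaler_nat; ring.
Qed.

Lemma D3_dec (p q r : {poly C}) :
  (((cub p + 'X * cub q + 'X^2 * cub r)^`())^`())^`() =
  3%:R *: (cub (O120 p) + 'X * cub (O201 q) + 'X^2 * cub (O012 r)).
Proof.
transitivity (3%:R *: (cub (opL 1 (opL 2 (opD p))) + 'X * cub (opL 2 (opD (opL 1 q))) + 'X^2 * cub (opD (opL 1 (opL 2 r))))); last by [].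
rewrite !derivD derX0 derX1 derX2 !derivZ !derX2 !derX1 !derX0 !derivZ !derX2.
rewrite -!/(opD _) !scaler_nat; ring.
Qed.

Lemma cub_coef0 (p : {poly C}) j : ~~ (3 %| j)%N -> (cub p)`_j = 0.
Proof. by move=> h; rewrite /cub coef_comp_poly_Xn // (negbTE h). Qed.

Lemma cub_coef3 (p : {poly C}) i : (cub p)`_(3 * i) = p`_i.
Proof. by rewrite /cub coef_comp_poly_Xn // dvdn_mulr // mulKn. Qed.

Lemma uniq0 (p q r : {poly C}) :
  cub p + 'X * cub q + 'X^2 * cub r = 0 -> [/\ p = 0, q = 0 & r = 0].
Proof.
move=> H.
have Hc j : (cub p)`_j + (if j == 0%N then 0 else (cub q)`_j.-1)
    + (if (j < 2)%N then 0 else (cub r)`_(j - 2)) = 0.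
  by rewrite -coefXM -coefXnM -!coefD H coef0.
have nd k : (~~ (3 %| 3 * k + 1) /\ ~~ (3 %| 3 * k + 2))%N.
  by split; apply/negP => /dvdnP [m hm]; lia.
split; apply/polyP => i; rewrite coef0.
- case: i => [|i].
    move: (Hc 0%N) => /=; rewrite !addr0 -(cub_coef3 p 0) => h; exact: h.
  have := Hc (3 * i.+1)%N; rewrite cub_coef3.
  have -> : (3 * i.+1 == 0)%N = false by lia.
  have -> : (3 * i.+1 < 2)%N = false by lia.
  have -> : ((3 * i.+1).-1 = 3 * i+2)%N by lia.
  have -> : (3 * i.+1 - 2 = 3 * i+1)%N by lia.
  by rewrite (@cub_coef0 q _ (proj2 (nd i))) (@cub_coef0 r _ (proj1 (nd i))) !addr0.
- have := Hc (3 * i + 1)%N; rewrite (@cub_coef0 p _ (proj1 (nd i))) add0r.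
  have -> : (3 * i+1 == 0)%N = false by lia.
  have -> : ((3 * i + 1).-1 = 3 * i)%N by lia.
  rewrite cub_coef3.
  case: i => [|i]; first by rewrite /= addr0.
  have -> : (3 * i.+1 + 1 < 2)%N = false by lia.
  have -> : (3 * i.+1 + 1 - 2 = 3 * i+2)%N by lia.
  by rewrite (@cub_coef0 r _ (proj2 (nd i))) addr0.
- have := Hc (3 * i + 2)%N; rewrite (@cub_coef0 p _ (proj2 (nd i))) add0r.
  have -> : (3 * i+2 == 0)%N = false by lia.
  have -> : ((3 * i + 2).-1 = 3 * i+1)%N by lia.
  rewrite (@cub_coef0 q _ (proj1 (nd i))) add0r.
  have -> : (3 * i+2 < 2)%N = false by lia.
  have -> : (3 * i+2 - 2 = 3 * i)%N by lia.
  by rewrite cub_coef3.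
Qed.

Lemma uniq3 (p q r p' q' r' : {poly C}) :
  cub p + 'X * cub q + 'X^2 * cub r = cub p' + 'X * cub q' + 'X^2 * cub r' ->
  [/\ p = p', q = q' & r = r'].
Proof.
move=> h.
have : cub (p - p') + 'X * cub (q - q') + 'X^2 * cub (r - r') = 0.
  have e : cub (p - p') + 'X * cub (q - q') + 'X^2 * cub (r - r') =
    (cub p + 'X * cub q + 'X^2 * cub r) - (cub p' + 'X * cub q' + 'X^2 * cub r').
    rewrite /cub !comp_polyB; ring.
  by rewrite e h subrr.
by case/uniq0 => /eqP; rewrite subr_eq0 => /eqP -> /eqP; rewrite subr_eq0 => /eqP -> /eqP; rewrite subr_eq0 => /eqP ->.
Qed.

Lemma scale_dec c (p q r : {poly C}) :
  c *: (cub p + 'X * cub q + 'X^2 * cub r) = cub (c *: p) + 'X * cub (c *: q) + 'X^2 * cub (c *: r).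
Proof. by rewrite /cub !comp_polyZ !scalerDr -!scalerAr. Qed.

Lemma appell3 W : Appell W -> forall m,
  (((W (m + 3)%N)^`())^`())^`() = ((m + 3) * (m + 2) * (m + 1))%N%:R *: W m.
Proof.
case=> _ HD m; have -> : (m + 3 = m.+3)%N by lia.
rewrite HD derivZ (HD m.+1) !derivZ (HD m) !scalerA -!natrM.
congr (_ *: _); congr (_%:R); lia.
Qed.

Lemma step W (HA : Appell W) {m p q r p' q' r'} :
  W (m + 3)%N = cub p + 'X * cub q + 'X^2 * cub r ->
  W m = cub p' + 'X * cub q' + 'X^2 * cub r' ->
  [/\ 3%:R *: O120 p = ((m + 3) * (m + 2) * (m + 1))%N%:R *: p',
      3%:R *: O201 q = ((m + 3) * (m + 2) * (m + 1))%N%:R *: q'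
    & 3%:R *: O012 r = ((m + 3) * (m + 2) * (m + 1))%N%:R *: r'].
Proof.
move=> h1 h2; have := @appell3 W HA m.
by rewrite h1 h2 D3_dec !scale_dec => /uniq3.
Qed.

Lemma solve {p o : {poly C}} {N K : nat} :
  3%:R *: o = K%:R *: p -> (0 < N)%N -> K = (3 * N)%N -> p = (N%:R)^-1 *: o.
Proof.
move=> h hN hK; subst K.
rewrite natrM -scalerA in h.
have h3 : (3%:R : C) != 0 by rewrite pnatr_eq0.
have {}h := scalerI h3 h.
by rewrite h scalerA mulVf ?scale1r // pnatr_eq0 -lt0n.
Qed.

Theorem proposition7 (W P Q R a1 a2 b1 b2 c1 c2 : nat -> {poly C}) :
  Appell W ->
  cubic_decomposition W P Q R a1 a2 b1 b2 c1 c2 ->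
  forall n : nat, (1 <= n)%N ->
  a2 n.-1 = ((n.+1 * (3 * n + 1) * (3 * n + 2))%N%:R)^-1 *: O012 (a2 n) /\
      b2 n.-1 = ((n.+1 * (3 * n + 2) * (3 * n + 4))%N%:R)^-1 *: O012 (b2 n) /\
      R n = ((n.+1 * (3 * n + 4) * (3 * n + 5))%N%:R)^-1 *: O012 (R n.+1) /\
      a1 n.-1 = ((n.+1 * (3 * n + 1) * (3 * n + 2))%N%:R)^-1 *: O201 (a1 n) /\
      Q n = ((n.+1 * (3 * n + 2) * (3 * n + 4))%N%:R)^-1 *: O201 (Q n.+1) /\
      c2 n.-1 = ((n * (3 * n + 1) * (3 * n + 2))%N%:R)^-1 *: O201 (c2 n) /\
      P n = ((n.+1 * (3 * n + 1) * (3 * n + 2))%N%:R)^-1 *: O120 (P n.+1) /\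
      b1 n.-1 = ((n * (3 * n - 1) * (3 * n + 1))%N%:R)^-1 *: O120 (b1 n) /\
      c1 n.-1 = ((n * (3 * n + 1) * (3 * n + 2))%N%:R)^-1 *: O120 (c1 n).
Proof.
move=> HA [_ _ _ HW] [|k] // _.
have [A0 A1 A2] := HW k.+1; have [B0 B1 B2] := HW k.+2; have [C0 C1 C2] := HW k.
have B0' := B0; rewrite (_ : (3 * k.+2 = 3 * k.+1 + 3)%N) in B0'; last by lia.
have B1' := B1; rewrite (_ : (3 * k.+2 + 1 = 3 * k.+1 + 1 + 3)%N) in B1'; last by lia.
have B2' := B2; rewrite (_ : (3 * k.+2 + 2 = 3 * k.+1 + 2 + 3)%N) in B2'; last by lia.
have A1' := A1; rewrite (_ : (3 * k.+1 + 1 = 3 * k + 1 + 3)%N) in A1'; last by lia.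
have A2' := A2; rewrite (_ : (3 * k.+1 + 2 = 3 * k + 2 + 3)%N) in A2'; last by lia.
have [e1 e2 e3] := step W HA B0' A0.
have [f1 f2 f3] := step W HA B1' A1.
have [g1 g2 g3] := step W HA B2' A2.
have [h1 h2 h3] := step W HA A1' C1.
have [i1 i2 i3] := step W HA A2' C2.
rewrite /prev /= in e1 e2 e3 f1 f2 f3 h1 h2 h3 i1 i2 i3.
split; first by apply: (solve e3); lia.
split; first by apply: (solve f3); lia.
split; first by apply: (solve g3); lia.
split; first by apply: (solve e2); lia.
split; first by apply: (solve f2); lia.
split; first by apply: (solve i2); lia.
split; first by apply: (solve e1); lia.
split; first by apply: (solve h1); lia.
by apply: (solve i1); lia.
Qed.
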